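(* Let $M$ be a topological space, $\mathcal{B}(M)$ its Borel $\sigma$-algebra and $\mathfrak{C}$ a quasipoint of $\mathcal{B}(M)$. Then $\mathfrak{C}$ contains some quasipoint $\mathfrak{B}$ of the lattice $\mathcal{T}(M)$ of open subsets of $M$ if and only if $\partial U\notin\mathfrak{C}$ for all open $U\subseteq M$, where $\partial U=\overline{U}\cap\overline{M\setminus U}$.
   Context: $\mathcal{T}(M)$ has operations $U\wedge V=U\cap V$, $U\vee V=U\cup V$. A quasipoint in a lattice $\mathbb{L}$ with least element $0$ is a maximal (w.r.t. inclusion) subset $\mathfrak{B}\subseteq\mathbb{L}$ such that $\mathfrak{B}\neq\emptyset$, $0\notin\mathfrak{B}$, and for all $a,b\in\mathfrak{B}$ there is $c\in\mathfrak{B}$ with $c\le a\wedge b$. *)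

(* Defs.v *)
From HB Require Import structures.
From mathcomp Require Import all_boot all_order all_algebra.
From mathcomp Require Import all_classical topology measure.

Local Open Scope classical_set_scope.

(* A lattice of subsets L of T, ordered by inclusion, with meet = intersection
   and least element = the empty set. *)
Definition quasipoint_pre {T : Type} (L : set (set T)) (B : set (set T)) : Prop :=
  [/\ B `<=` L, B !=set0, ~ B set0 &
      forall a b, B a -> B b -> exists2 c, B c & c `<=` a `&` b].

Definition is_quasipoint {T : Type} (L : set (set T)) (B : set (set T)) : Prop :=
  quasipoint_pre L B /\
  forall B', quasipoint_pre L B' -> B `<=` B' -> B' = B.

Definition open_sets (M : topologicalType) : set (set M) := [set U | open U].

Definition borel_sets (M : topologicalType) : set (set M) := <<s open_sets M >>.

Definition boundary {M : topologicalType} (U : set M) : set M :=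
  closure U `&` closure (~` U).

(* Main.v *)
Require Import Defs.
From HB Require Import structures.
From mathcomp Require Import all_boot all_order all_algebra.
From mathcomp Require Import all_classical topology measure.
Local Open Scope classical_set_scope.

Lemma qp_up {T : Type} (L C : set (set T)) : is_quasipoint L C ->
  forall A c, L A -> C c -> c `<=` A -> C A.
Proof.
move=> [[CL [c0 Cc0] Cn0 Cdir] Cmax] A c LA Cc cA.
pose C' := [set X | L X /\ exists2 c, C c & c `<=` X].
have CC' : C `<=` C' by move=> X CX; split; [exact: CL | exists X].
have qC' : quasipoint_pre L C'.
  split.
  - by move=> X [].
  - by exists c0; apply: CC'.
  - move=> [_ [d Cd d0]].
    apply: Cn0; have <- // : d = set0 by apply/seteqP; split=> // x /d0.
  - move=> X Y [LX [c1 Cc1 c1X]] [LY [c2 Cc2 c2Y]].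
    have [d Cd dsub] := Cdir _ _ Cc1 Cc2.
    exists d; first exact: CC'.
    by move=> x /dsub [/c1X ? /c2Y ?].
have <- := Cmax _ qC' CC'.
by split=> //; exists c.
Qed.

Lemma qp_ultra {T : Type} (L C : set (set T)) : setI_closed L ->
  is_quasipoint L C -> forall A, L A -> ~ C A -> exists2 c, C c & A `&` c = set0.
Proof.
move=> hI qC A LA nCA.
have [[CL [c0 Cc0] Cn0 Cdir] Cmax] := qC.
apply: contrapT => hne.
have ne : forall c, C c -> A `&` c != set0.
  by move=> c Cc; apply/eqP => h; apply: hne; exists c.
pose C' := [set X | L X /\ exists2 c, C c & A `&` c `<=` X].
have CC' : C `<=` C'.
  by move=> X CX; split; [exact: CL | exists X => // x []].
have qC' : quasipoint_pre L C'.
  split.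
  - by move=> X [].
  - by exists c0; apply: CC'.
  - move=> [_ [d Cd d0]].
    by move/eqP: (ne d Cd); apply; apply/seteqP; split=> // x /d0.
  - move=> X Y [LX [c1 Cc1 c1X]] [LY [c2 Cc2 c2Y]].
    have [d Cd dsub] := Cdir _ _ Cc1 Cc2.
    exists (A `&` d).
      split; first by apply: hI => //; exact: CL.
      by exists d.
    by move=> x [Ax /dsub [? ?]]; split; [apply: c1X | apply: c2Y].
have eC := Cmax _ qC' CC'.
apply: nCA; rewrite -eC; split => //; exists c0 => // x [].
Qed.

Lemma borel_setI (M : topologicalType) : setI_closed (borel_sets M).
Proof.
have h := smallest_sigma_algebra setT (open_sets M).
move/sigma_algebraP: h => /(_ (fun _ _ _ _ => I)) [] //.
Qed.

Lemma borel_C (M : topologicalType) (A : set M) : borel_sets M A -> borel_sets M (~` A).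
Proof.
have [_ hC _] := smallest_sigma_algebra setT (open_sets M).
by move=> /hC; rewrite setTD.
Qed.

Lemma borel_open (M : topologicalType) (A : set M) : open A -> borel_sets M A.
Proof. by move=> oA; apply: sub_sigma_algebra. Qed.

Lemma borel_closed (M : topologicalType) (A : set M) : closed A -> borel_sets M A.
Proof.
move=> cA; rewrite -(setCK A); apply: borel_C; apply: borel_open; exact: closed_openC.
Qed.

Lemma boundaryE (M : topologicalType) (U : set M) : open U ->
  boundary U = closure U `&` ~` U.
Proof.
move=> oU; rewrite /boundary; congr (_ `&` _).
by apply/esym/closure_id; apply: open_closedC.
Qed.

Theorem proposition3p45 (M : topologicalType) (C : set (set M)) :
  is_quasipoint (borel_sets M) C ->
  ((exists2 B, is_quasipoint (open_sets M) B & B `<=` C) <->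
   (forall U : set M, open U -> ~ C (boundary U))).
Proof.
move=> qC; have [[CL [c0 Cc0] Cn0 Cdir] Cmax] := qC.
have CI : forall a b, C a -> C b -> C (a `&` b).
  move=> a b Ca Cb; have [c Cc cs] := Cdir _ _ Ca Cb.
  apply: (qp_up _ _ qC (a `&` b) c _ Cc cs); apply: borel_setI; exact: CL.
have Cempty : forall a, C a -> a = set0 -> False.
  by move=> a Ca a0; apply: Cn0; rewrite -a0.
split.
- move=> [B qB BC] U oU CbU.
  have bU := boundaryE _ _ oU.
  have [BU|nBU] := pselect (B U).
    apply: (Cempty _ (CI _ _ (BC _ BU) CbU)).
    by rewrite bU; apply/seteqP; split=> // x [? [_ ?]].
  have [b Bb bU0] := qp_ultra _ _ (fun a b : set M => @openI M a b) qB _ oU nBU.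
  have [[BL _ _ _] _] := qB.
  apply: (Cempty _ (CI _ _ (BC _ Bb) CbU)).
  apply/seteqP; split=> // x [bx [clx _]].
  have cl : closed (~` b) by apply: open_closedC; exact: BL.
  have : closure U `<=` ~` b.
    have e : closure (~` b) = ~` b by apply/esym/closure_id.
    rewrite -e; apply: closureS.
    by move=> y Uy hy; have : (U `&` b) y by []; by rewrite bU0.
  by move=> /(_ x clx).
- move=> hb.
  pose B := [set U | open U /\ C U].
  have qB : quasipoint_pre (open_sets M) B.
    split.
    + by move=> X [].
    + exists setT; split; first exact: openT.
      apply: (qp_up _ _ qC setT c0 _ Cc0) => //.
      apply: borel_open; exact: openT.
    + by move=> [_ /Cn0].
    + move=> a b [oa Ca] [ob Cb]; exists (a `&` b) => //.
      by split; [exact: openI | exact: CI].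
  exists B; last by move=> X [].
  split => // B' qB' BB'; have [B'L _ B'n0 B'dir] := qB'.
  apply/seteqP; split => // U B'U; have oU : open U := B'L _ B'U.
  split => //; apply: contrapT => nCU.
  have [c Cc Uc0] := qp_ultra _ _ (@borel_setI M) qC _ (borel_open _ _ oU) nCU.
  have CcU : C (~` U).
    apply: (qp_up _ _ qC _ c _ Cc); first exact: (borel_C _ _ (borel_open _ _ oU)).
    by move=> x cx Ux; have : (U `&` c) x by []; rewrite Uc0.
  have bor : borel_sets M (boundary U).
    rewrite boundaryE //; apply: (borel_setI M (closure U) (~` U)).
      apply: (borel_closed M (closure U)); exact: closed_closure.
    exact: (borel_C _ _ (borel_open _ _ oU)).
  have [d Cd bd0] := qp_ultra _ _ (@borel_setI M) qC _ bor (hb U oU).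
  pose V := ~` closure U.
  have oV : open V by apply: closed_openC; exact: closed_closure.
  have CV : C V.
    apply: (qp_up _ _ qC V (~` U `&` d)); first exact: (borel_open _ _ oV).
      exact: CI.
    move=> x [nUx dx] clx.
    have : (boundary U `&` d) x by rewrite boundaryE.
    by rewrite bd0.
  have B'V : B' V by apply: BB'.
  have [e B'e eUV] := B'dir _ _ B'U B'V.
  apply: B'n0; have <- // : e = set0.
  apply/seteqP; split=> // x /eUV [Ux Vx]; apply: Vx; exact: subset_closure.
Qed.
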